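(* Let $f:X\to\mathcal G$ be a convex function and $x_0\in\operatorname{dom} f$. Then $x_0$ solves the strict scalarized Stampacchia inequality, i.e. $$\forall x\in X,\ \forall z^*\in C^-\setminus\{0\}:\quad \varphi_{f,z^*}(x_0)=-\infty\ \text{ or }\ 0\le \varphi'_{f,z^*}(x_0,x-x_0),$$ if and only if $f(x_0)=\inf f[X]$.
   Context: $X$ is a real linear space and $Z$ a real locally convex Hausdorff space with topological dual $Z^*$. $C\subseteq Z$ is a closed convex cone with $0\in C$ such that $C^-=\{z^*\in Z^*: z^*(c)\le 0\ \forall c\in C\}$ satisfies $C^-\setminus\{0\}\ne\emptyset$. Let $\mathcal G=\{A\subseteq Z: A=\operatorname{cl}\operatorname{co}(A+C)\}$ (it contains $\emptyset$ and $Z$). For $A,B\in\mathcal G$: $A\oplus B=\operatorname{cl}\{a+b: a\in A,b\in B\}$, $tA=\{ta:a\in A\}$ for $t>0$. A function $f:X\to\mathcal G$ is convex if $f(tx_1+(1-t)x_2)\supseteq tf(x_1)\oplus(1-t)f(x_2)$ for all $x_1,x_2\in X$, $t\in(0,1)$; $\operatorname{dom} f=\{x: f(x)\neq\emptyset\}$; $\inf f[X]=\operatorname{cl}\operatorname{co}\bigcup_{x\in X}f(x)$. On $\overline{\mathbb R}=\mathbb R\cup\{\pm\infty\}$ use the inf-addition $\dot+$ (usual sum, with $r\dot+(+\infty)=+\infty$ for every $r$, in particular $(-\infty)\dot+(+\infty)=+\infty$) and the inf-residuation $r\ominus s=\inf\{t\in\mathbb R: r\le s\dot+ t\}$ (with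 $\inf\emptyset=+\infty$); $\frac1t(\pm\infty)=\pm\infty$ for $t>0$. For $z^*\in C^-\setminus\{0\}$, $\varphi_{f,z^*}(x)=\inf\{-z^*(z): z\in f(x)\}$ (equal to $+\infty$ if $f(x)=\emptyset$). For $\varphi:X\to\overline{\mathbb R}$, $\varphi'(x,u)=\inf_{t>0}\frac1t\big(\varphi(x+tu)\ominus\varphi(x)\big)$; $\varphi'_{f,z^*}$ denotes this derivative of $\varphi_{f,z^*}$. *)

(* Defs.v *)
From HB Require Import structures.
From mathcomp Require Import all_boot all_order all_algebra.
From mathcomp Require Import all_classical all_reals all_analysis.
Set Implicit Arguments. Unset Strict Implicit. Unset Printing Implicit Defensive.
Import Order.TTheory GRing.Theory Num.Theory.
Local Open Scope classical_set_scope.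
Local Open Scope ring_scope.

Section Defs.
Variable R : realType.

Section SetOps.
Variable Z : tvsType R.

Definition conv_hull (A : set Z) : set Z :=
  \bigcap_(B in [set B : set Z | convex_set (B : set (convex_lmodType Z)) /\ A `<=` B]) B.

Definition clco (A : set Z) : set Z := closure (conv_hull A).

Definition msum (A B : set Z) : set Z := [set a + b | a in A & b in B].

Definition oplus (A B : set Z) : set Z := closure (msum A B).

Definition sscale (t : R) (A : set Z) : set Z := [set t *: a | a in A].

Definition convex_cone (C : set Z) : Prop :=
  C 0 /\ (forall t c, 0 < t -> C c -> C (t *: c)) /\
  convex_set (C : set (convex_lmodType Z)).

Definition in_dual (zs : Z -> R) : Prop :=
  linear_for *%R zs /\ continuous (zs : Z -> R^o).

Definition neg_dual_cone (C : set Z) (zs : Z -> R) : Prop :=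
  in_dual zs /\ (forall c, C c -> zs c <= 0).

Definition in_G (C : set Z) (A : set Z) : Prop := A = clco (msum A C).
End SetOps.

Section Fun.
Variables (X : lmodType R) (Z : tvsType R) (C : set Z).

Definition G_convex (f : X -> set Z) : Prop :=
  forall x1 x2 (t : R), 0 < t < 1 ->
    oplus (sscale t (f x1)) (sscale (1 - t) (f x2)) `<=` f (t *: x1 + (1 - t) *: x2).

Definition dom (f : X -> set Z) : set X := [set x | f x != set0].

Definition inf_image (f : X -> set Z) : set Z := clco (\bigcup_(x in setT) f x).

Definition phi (f : X -> set Z) (zs : Z -> R) (x : X) : \bar R :=
  ereal_inf [set (- zs z)%:E | z in f x].
End Fun.

(* inf-addition on extended reals: +oo absorbing *)
Definition iadd (r s : \bar R) : \bar R :=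
  match r, s with
  | +oo%E, _ => +oo%E
  | _, +oo%E => +oo%E
  | -oo%E, _ => -oo%E
  | _, -oo%E => -oo%E
  | (a%:E)%E, (b%:E)%E => (a + b)%:E
  end.

Definition ires (r s : \bar R) : \bar R :=
  ereal_inf [set t%:E | t in [set t : R | (r <= iadd s t%:E)%E]].

Definition ddir (X : lmodType R) (g : X -> \bar R) (x u : X) : \bar R :=
  ereal_inf [set ((t^-1)%:E * ires (g (x + t *: u)%R) (g x))%E | t in [set t : R | 0 < t]].

End Defs.

(* Main.v *)
Require Import Defs.
From HB Require Import structures.
From mathcomp Require Import all_boot all_order all_algebra.
From mathcomp Require Import all_classical all_reals all_analysis.
From mathcomp Require Import ring lra.
Import Order.TTheory GRing.Theory Num.Theory.
Local Open Scope classical_set_scope.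
Local Open Scope ring_scope.

Set Implicit Arguments. Unset Strict Implicit.

Section HBsec.
Variables (R : realType) (E : lmodType R).

Definition sublin (q : E -> R) :=
  (forall a b, q (a + b) <= q a + q b) /\ (forall s a, 0 < s -> q (s *: a) = s * q a).

Lemma sublin0 q : sublin q -> q 0 = 0.
Proof.
move=> [_ hs]; have h2 : (0:R) < 2 by lra.
have := hs 2 0 h2; rewrite scaler0; lra.
Qed.

Lemma sublinZ q s a : sublin q -> 0 <= s -> q (s *: a) = s * q a.
Proof.
move=> hq; rewrite le_eqVlt => /orP[/eqP<-|s0]; last exact: hq.2.
by rewrite scale0r mul0r sublin0.
Qed.

Lemma sublinN q a : sublin q -> - q (- a) <= q a.
Proof.
move=> hq; have := hq.1 a (- a); rewrite subrr sublin0 //; lra.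
Qed.

Lemma inf2 (A B : set R) c : A !=set0 -> B !=set0 ->
  (forall u v, A u -> B v -> c <= u + v) -> c <= inf A + inf B.
Proof.
move=> nA nB h.
have h1 : forall u, A u -> c - u <= inf B.
  move=> u Au; apply: lb_le_inf => // v Bv; have := h u v Au Bv; lra.
have : c - inf B <= inf A.
  apply: lb_le_inf => // u Au; have := h1 u Au; lra.
lra.
Qed.

Definition lina (q : E -> R) (x y : E) :=
  inf [set q (y + t *: x) - t * q x | t in [set t : R | 0 <= t]].

Section lina_sec.
Variables (q : E -> R) (x : E) (hq : sublin q).

Lemma lina_lb y t : 0 <= t -> - q (- y) <= q (y + t *: x) - t * q x.
Proof.
move=> t0; rewrite -(sublinZ _ hq t0).
have := hq.1 (y + t *: x) (- y); rewrite addrC addKr; lra.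
Qed.

Lemma lina_ne y : [set q (y + t *: x) - t * q x | t in [set t : R | 0 <= t]] !=set0.
Proof. exists (q (y + 0 *: x) - 0 * q x). exists 0 => //=. Qed.

Lemma lina_hlb y : has_lbound [set q (y + t *: x) - t * q x | t in [set t : R | 0 <= t]].
Proof. by exists (- q (- y)) => _ [t t0 <-]; exact: lina_lb. Qed.

Lemma lina_le y t : 0 <= t -> lina q x y <= q (y + t *: x) - t * q x.
Proof. by move=> t0; apply: ge_inf; [exact: lina_hlb|exists t]. Qed.

Lemma lina_ge y : - q (- y) <= lina q x y.
Proof. by apply: lb_le_inf; [exact: lina_ne|move=> _ [t t0 <-]; exact: lina_lb]. Qed.

Lemma lina_leq y : lina q x y <= q y.
Proof. by have := lina_le y (lexx 0); rewrite scale0r addr0 mul0r subr0. Qed.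

Lemma lina_Nx : lina q x (- x) <= - q x.
Proof.
have := lina_le (- x) ler01; rewrite scale1r addNr sublin0 // mul1r; lra.
Qed.

Lemma lina_sublin : sublin (lina q x).
Proof.
split.
- move=> a b; apply: inf2; [exact: lina_ne|exact: lina_ne|].
  move=> _ _ [s s0 <-] [t t0 <-].
  apply: (le_trans (lina_le (a + b) (addr_ge0 s0 t0))).
  have -> : a + b + (s + t) *: x = (a + s *: x) + (b + t *: x).
    by rewrite scalerDl addrACA.
  have := hq.1 (a + s *: x) (b + t *: x); lra.
- move=> s a s0; apply/eqP; rewrite eq_le; apply/andP; split.
  + rewrite -ler_pdivrMl //; apply: lb_le_inf; first exact: lina_ne.
    move=> _ [t t0 <-]; rewrite ler_pdivrMl //.
    apply: (le_trans (lina_le _ (mulr_ge0 (ltW s0) t0))).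
    rewrite -scalerA -scalerDr hq.2 // mulrBr mulrA; lra.
  + apply: lb_le_inf; first exact: lina_ne.
    move=> _ [t t0 <-].
    have t0' : 0 <= s^-1 * t by rewrite mulr_ge0 // invr_ge0 ltW.
    have := lina_le a t0'; rewrite -(ler_pM2l s0) => /le_trans; apply.
    have -> : s *: a + t *: x = s *: (a + (s^-1 * t) *: x).
      by rewrite scalerDr scalerA mulrA divff ?gt_eqF // mul1r.
    by rewrite hq.2 // mulrBr !mulrA divff ?gt_eqF // mul1r.
Qed.

End lina_sec.

Section zorn_sec.
Variables (p : E -> R) (x0 : E) (hp : sublin p).

Definition Sset (q : E -> R) := sublin q /\ (forall y, q y <= p y) /\ q (- x0) <= - p x0.

Lemma Sset_lina q x : Sset q -> Sset (lina q x).
Proof.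
move=> [hq [qp qx]]; split; first exact: lina_sublin.
split; first by move=> y; exact: le_trans (lina_leq _ hq _) (qp y).
exact: le_trans (lina_leq _ hq _) qx.
Qed.

Lemma Sset_chain (A : set (E -> R)) : A !=set0 -> A `<=` Sset ->
  (forall a b, A a -> A b -> (forall y, a y <= b y) \/ (forall y, b y <= a y)) ->
  exists r, Sset r /\ forall a, A a -> forall y, r y <= a y.
Proof.
move=> [a0 Aa0] AS tot.
pose r y := inf [set a y | a in A].
have ne y : [set a y | a in A] !=set0 by exists (a0 y); exists a0.
have hlb y : has_lbound [set a y | a in A].
  exists (- p (- y)) => _ [a Aa <-].
  have [ha [ap _]] := AS a Aa.
  by apply: le_trans (sublinN _ ha); rewrite lerN2; exact: ap.
have rle a y : A a -> r y <= a y by move=> Aa; apply: ge_inf => //; exists a.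
have rsub : sublin r.
  split.
  - move=> a b; apply: inf2 => // _ _ [q1 A1 <-] [q2 A2 <-].
    have [h1 _] := AS q1 A1; have [h2 _] := AS q2 A2.
    case: (tot q1 q2 A1 A2) => h.
    + apply: (le_trans (rle q1 _ A1)); apply: (le_trans (h1.1 a b)).
      by rewrite lerD2l.
    + apply: (le_trans (rle q2 _ A2)); apply: (le_trans (h2.1 a b)).
      by rewrite lerD2r.
  - move=> s a s0; apply/eqP; rewrite eq_le; apply/andP; split.
    + rewrite -ler_pdivrMl //; apply: lb_le_inf => // _ [q Aq <-].
      rewrite ler_pdivrMl //; have [hq _] := AS q Aq.
      by rewrite -hq.2 //; exact: rle.
    + apply: lb_le_inf => // _ [q Aq <-].
      have [hq _] := AS q Aq.
      by rewrite hq.2 // ler_pM2l //; exact: rle.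
exists r; split; last by move=> a Aa y; exact: rle.
split => //; split.
- move=> y; apply: le_trans (rle a0 y Aa0) _; exact: (AS a0 Aa0).2.1.
- apply: le_trans (rle a0 _ Aa0) _; exact: (AS a0 Aa0).2.2.
Qed.

Lemma hahn_banach : exists L : E -> R,
  (forall a b, L (a + b) = L a + L b) /\ (forall s a, L (s *: a) = s * L a) /\
  (forall y, L y <= p y) /\ p x0 <= L x0.
Proof.
pose T := {q : E -> R | Sset q}.
have S0 : Sset (lina p x0).
  split; first exact: lina_sublin.
  split; [move=> y; exact: lina_leq|exact: lina_Nx].
pose t0 : T := exist _ _ S0.
pose Rl (a b : T) := `[< forall y, sval b y <= sval a y >].
have [//| | | t tmax] := @ZL_preorder T t0 Rl.
- by move=> a; apply/asboolP => y.
- move=> a b c /asboolP hab /asboolP hbc; apply/asboolP => y.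
  exact: le_trans (hbc y) (hab y).
- move=> A totA.
  case: (pselect (A !=set0)) => [[a Aa]|nA]; last first.
    by exists t0 => s As; exfalso; apply: nA; exists s.
  have h1 : sval @` A !=set0 by exists (sval a); exists a.
  have h2 : sval @` A `<=` Sset by move=> _ [b _ <-]; exact: (svalP b).
  have h3 : forall a b, (sval @` A) a -> (sval @` A) b ->
      (forall y, a y <= b y) \/ (forall y, b y <= a y).
    move=> _ _ [b Ab <-] [c Ac <-].
    by case: (totA b c Ab Ac) => /asboolP h; [right|left].
  have [r [Sr rle]] := Sset_chain h1 h2 h3.
  exists (exist _ r Sr) => b Ab; apply/asboolP => y /=.
  by apply: rle; exists b.
- case: t tmax => q Sq /= tmax.
  have [hq [qp qx]] := Sq.
  have qge : forall x y, q y <= lina q x y.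
    move=> x y.
    have := tmax (exist _ _ (Sset_lina x Sq)).
    have /[swap]/[apply] /asboolP/= h : Rl (exist _ q Sq) (exist _ _ (Sset_lina x Sq)).
      by apply/asboolP => z /=; exact: lina_leq.
    exact: h.
  have add : forall a b, q (a + b) = q a + q b.
    move=> a b; apply/eqP; rewrite eq_le hq.1 /=.
    have := le_trans (qge a b) (lina_le _ hq b ler01).
    have e : b + 1 *: a = a + b by rewrite scale1r addrC.
    by rewrite e mul1r => h; lra.
  have qN : forall a, q (- a) = - q a.
    move=> a; have := add a (- a); rewrite subrr sublin0 //; lra.
  exists q; split => //; split; last first.
    by split => //; have := qx; rewrite qN; lra.
  move=> s a; have [s0|s0|->] := ltgtP s 0; last by rewrite scale0r mul0r sublin0.
    have -> : s *: a = - ((- s) *: a) by rewrite scaleNr opprK.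
    by rewrite qN hq.2 ?oppr_gt0 // mulNr opprK.
  exact: hq.2.
Qed.

End zorn_sec.
End HBsec.

Section Sep.
Variables (R : realType) (Z : tvsType R).

Definition cvx (U : set Z) := forall a b l, 0 <= l -> l <= 1 -> U a -> U b ->
  U (l *: a + (1 - l) *: b).

Lemma cvx_convex (V : set Z) : convex_set (V : set (convex_lmodType Z)) -> cvx V.
Proof.
move=> cV a b l l0 l1 Va Vb.
have := cV a b (Itv01 l0 l1) (mem_set Va) (mem_set Vb).
by move/set_mem.
Qed.

Lemma convlin (l : R) (p q p' q' : Z) :
  l *: (p + q) + (1 - l) *: (p' + q') = (l *: p + (1 - l) *: p') + (l *: q + (1 - l) *: q').
Proof. by rewrite !scalerDr addrACA. Qed.

Lemma convcst (l : R) (q : Z) : l *: q + (1 - l) *: q = q.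
Proof. by rewrite -scalerDl addrC subrK scale1r. Qed.

Lemma aff_cont (a : Z) (k : R) : continuous (fun v : Z => a + k *: v).
Proof.
move=> v.
have h0 : {for v, continuous (fun v : Z => ((k : R^o), v))}.
  by apply: (@cvg_pair _ _ _ _ (nbhs (k : R^o))); [exact: cvg_cst|exact: cvg_id].
have h1 : {for v, continuous (fun v : Z => k *: v)}.
  exact: (continuous_comp h0 (scale_continuous ((k : R^o), v))).
have h2 : {for v, continuous (fun v : Z => (a, k *: v))}.
  by apply: (@cvg_pair _ _ _ _ (nbhs a) (nbhs (k *: v))); [exact: cvg_cst|exact: h1].
exact: (continuous_comp h2 (add_continuous (a, k *: v))).
Qed.

Arguments aff_cont : clear implicits.

Lemma scl_cont (y : Z) : continuous (fun t : R^o => t *: y).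
Proof.
move=> t.
have h0 : {for t, continuous (fun t : R^o => (t, y))}.
  by apply: (@cvg_pair _ _ _ _ (nbhs t) (nbhs y)); [exact: cvg_id|exact: cvg_cst].
exact: (continuous_comp h0 (scale_continuous (t, y))).
Qed.

Arguments scl_cont : clear implicits.

Lemma absorb (W : set Z) : nbhs (0 : Z) W -> forall y, exists t, 0 < t /\ W (t *: y).
Proof.
move=> nW y.
have /= := scl_cont y 0 W; rewrite scale0r => /(_ nW) hh.
have : nbhs (0 : R^o) [set t : R^o | W (t *: y)] := hh.
move=> /nbhs_ballP [e /= e0 he].
exists (e / 2); split; first by lra.
apply: he; rewrite /ball /= sub0r normrN gtr0_norm; lra.
Qed.

Section Mink.
Variables (U : set Z) (cU : cvx U) (U0 : U 0)
  (abs : forall y, exists l, 0 < l /\ U (l^-1 *: y)).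

Definition mink y := inf [set l | 0 < l /\ U (l^-1 *: y)].

Lemma mink_star y l m : 0 < l -> l <= m -> U (l^-1 *: y) -> U (m^-1 *: y).
Proof.
move=> l0 lm Uy; have m0 : 0 < m by exact: lt_le_trans lm.
have q0 : 0 <= l / m by rewrite divr_ge0 // ltW.
have q1 : l / m <= 1 by rewrite ler_pdivrMr // mul1r.
have := cU q0 q1 Uy U0; rewrite scaler0 addr0 scalerA.
by rewrite mulrAC divff ?gt_eqF // mul1r.
Qed.

Lemma mink_ne y : [set l | 0 < l /\ U (l^-1 *: y)] !=set0.
Proof. by have [l hl] := abs y; exists l. Qed.

Lemma mink_hlb y : has_lbound [set l | 0 < l /\ U (l^-1 *: y)].
Proof. by exists 0 => l [l0 _]; exact: ltW. Qed.

Lemma mink_le y l : 0 < l -> U (l^-1 *: y) -> mink y <= l.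
Proof. by move=> l0 Ul; apply: ge_inf; [exact: mink_hlb|]. Qed.

Lemma mink_lt1 y : mink y < 1 -> U y.
Proof.
move=> /(inf_lt (mink_ne y)) [l [l0 Ul] l1].
by have := mink_star l0 (ltW l1) Ul; rewrite invr1 scale1r.
Qed.

Lemma mink_U y : U y -> mink y <= 1.
Proof. by move=> Uy; apply: mink_le => //; rewrite invr1 scale1r. Qed.

Lemma mink_sublin : sublin mink.
Proof.
split.
- move=> a b; apply: inf2; [exact: mink_ne|exact: mink_ne|].
  move=> l m [l0 Ul] [m0 Um]; apply: mink_le; first exact: addr_gt0.
  have lm0 : 0 < l + m by exact: addr_gt0.
  have q0 : 0 <= l / (l + m) by rewrite divr_ge0 // ltW.
  have q1 : l / (l + m) <= 1 by rewrite ler_pdivrMr // mul1r lerDl ltW.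
  have := cU q0 q1 Ul Um.
  suff -> : l / (l + m) *: (l^-1 *: a) + (1 - l / (l + m)) *: (m^-1 *: b) =
            (l + m)^-1 *: (a + b) by [].
  rewrite !scalerA scalerDr; congr (_ *: _ + _ *: _).
  + by field; rewrite ?gt_eqF.
  + by field; rewrite ?gt_eqF.
- move=> s a s0; apply/eqP; rewrite eq_le; apply/andP; split.
  + rewrite -ler_pdivrMl //; apply: lb_le_inf; first exact: mink_ne.
    move=> l [l0 Ul]; rewrite ler_pdivrMl //; apply: mink_le.
      exact: mulr_gt0.
    by rewrite scalerA invfM mulrAC mulVf ?gt_eqF // mul1r.
  + apply: lb_le_inf; first exact: mink_ne.
    move=> m [m0 Um]; rewrite -ler_pdivlMl //.
    rewrite mulrC; apply: mink_le; first by rewrite divr_gt0.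
    by move: Um; rewrite scalerA invfM invrK mulrC.
Qed.

End Mink.

Lemma sep_point (U : set Z) (x : Z) : cvx U -> U 0 ->
  (forall y, exists l, 0 < l /\ U (l^-1 *: y)) -> ~ U x ->
  exists L : Z -> R, (forall a b, L (a + b) = L a + L b) /\ (forall s a, L (s *: a) = s * L a) /\
  (forall y, L y <= mink U y) /\ 1 <= L x.
Proof.
move=> cU U0 abs nUx.
have hs : sublin (mink U) by apply: mink_sublin.
have [L [La [Ls [Lp Lx]]]] := hahn_banach x hs.
exists L; do 3!split => //; apply: le_trans Lx.
by rewrite leNgt; apply/negP => h; apply: nUx; apply: (mink_lt1 (U := U)).
Qed.

Lemma separation (D : set Z) (z d0 : Z) : cvx D -> D d0 -> ~ closure D z ->
  exists L : Z -> R, (forall a b, L (a + b) = L a + L b) /\ (forall s a, L (s *: a) = s * L a) /\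
    continuous (L : Z -> R^o) /\ exists c, c < L z /\ forall d, D d -> L d <= c.
Proof.
move=> cD Dd0 nz.
have [N [Nz DN]] : exists N, nbhs z N /\ forall d, D d -> ~ N d.
  move/existsNP: nz => [N /not_implyP [Nz nDN]].
  by exists N; split => // d Dd Nd; apply: nDN; exists d.
have [B Bc [Bop Bb]] := @locally_convex R Z.
have [V [BV Vz] VN] := Bb z N Nz.
have cV : cvx V := cvx_convex (Bc V (mem_set BV)).
have nV : nbhs z V by apply: open_nbhs_nbhs; split => //; exact: Bop.
pose W := [set w | V (z + w) /\ V (z - w)].
have cW : cvx W.
  move=> a b l l0 l1 [Va1 Va2] [Vb1 Vb2]; split.
  + by have := cV _ _ _ l0 l1 Va1 Vb1; rewrite convlin convcst.
  + have := cV _ _ _ l0 l1 Va2 Vb2; rewrite convlin convcst.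
    by rewrite opprD -!scalerN.
have W0 : W 0 by rewrite /W /= addr0 subr0.
have nW : nbhs (0 : Z) W.
  have h1 : nbhs (0 : Z) [set w | V (z + w)].
    have /= := aff_cont z 1 0 V; rewrite scaler0 addr0 => /(_ nV) h.
    have h' : nbhs (0 : Z) [set w | V (z + 1 *: w)] := h.
    by apply: (filterS _ h') => w /=; rewrite scale1r.
  have h2 : nbhs (0 : Z) [set w | V (z - w)].
    have /= := aff_cont z (-1) 0 V; rewrite scaler0 addr0 => /(_ nV) h.
    have h' : nbhs (0 : Z) [set w | V (z + (-1) *: w)] := h.
    by apply: (filterS _ h') => w /=; rewrite scaleN1r.
  exact: filterI h1 h2.
pose U := [set u | exists d w, D d /\ W w /\ u = (d + w) - d0].
have cU : cvx U.
  move=> a b l l0 l1 [d1 [w1 [D1 [W1 ->]]]] [d2 [w2 [D2 [W2 ->]]]].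
  exists (l *: d1 + (1 - l) *: d2), (l *: w1 + (1 - l) *: w2); split; first exact: cD.
  split; first exact: cW.
  by rewrite convlin convcst convlin.
have U0 : U 0 by exists d0, 0; rewrite addr0 subrr.
have WU : forall w, W w -> U w.
  by move=> w Ww; exists d0, w; split => //; split => //; rewrite addrC addKr.
have abs : forall y, exists l, 0 < l /\ U (l^-1 *: y).
  move=> y; have [t [t0 Wt]] := absorb nW y.
  by exists t^-1; rewrite invrK invr_gt0; split => //; exact: WU.
have nUx : ~ U (z - d0).
  move=> [d [w [Dd [[_ Vw] e]]]].
  have e' : z - w = d by move: e => /eqP; rewrite subr_eq subrK => /eqP ->; rewrite addrK.
  by apply: (DN d Dd); apply: VN; rewrite -e'.
have [L [La [Ls [Lp Lx]]]] := sep_point cU U0 abs nUx.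
have LN : forall a, L (- a) = - L a by move=> a; rewrite -scaleN1r Ls mulN1r.
have Lmink : forall u, U u -> L u <= 1.
  by move=> u Uu; apply: le_trans (Lp u) _; apply: mink_U.
have LW : forall w, W w -> `|L w| <= 1.
  move=> w Ww; rewrite ler_norml; apply/andP; split; last exact/Lmink/WU.
  rewrite lerNl -LN; apply/Lmink/WU; case: Ww => h1 h2; split => //.
  by rewrite opprK.
exists L; split => //; split => //; split.
- move=> y; apply/cvgrPdist_lt => eps eps0.
  pose k := 2 / eps.
  have k0 : 0 < k by rewrite divr_gt0.
  have /= := aff_cont (- (k *: y)) k y W; rewrite addNr => /(_ nW) hh.
  have hh' : nbhs y [set v | W (- (k *: y) + k *: v)] := hh.
  apply: (filterS _ hh') => v /= Wv; have := LW _ Wv.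
  rewrite La LN !Ls ler_norml => /andP[h1 h2].
  have ke : k * eps = 2 by rewrite /k divfK // gt_eqF.
  rewrite ltr_norml; apply/andP; split; nra.
- have [t [t0 Wt]] := absorb nW (z - d0).
  exists (1 + L d0 - t); split.
    rewrite -(subrK d0 z) La; have := Lx; lra.
  move=> d Dd.
  have : U ((d + t *: (z - d0)) - d0) by exists d, (t *: (z - d0)).
  move/Lmink; rewrite La LN La Ls => h.
  have : t <= t * L (z - d0) by rewrite ler_pMr.
  lra.
Qed.

End Sep.

Section Aux.
Variables (R : realType) (Z : tvsType R).

Lemma conv_hull_sub (A : set Z) : A `<=` conv_hull A.
Proof. by move=> a Aa B [_ AB]; exact: AB. Qed.

Lemma conv_hull_cvx (A : set Z) : cvx (conv_hull A).
Proof.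
move=> a b l l0 l1 ha hb B [cB AB].
exact: (cvx_convex cB) (ha B (conj cB AB)) (hb B (conj cB AB)).
Qed.

Lemma conv_hull_min (A B : set Z) : cvx B -> A `<=` B -> conv_hull A `<=` B.
Proof.
move=> cB AB y hy; apply: hy; split => //.
move=> a b l /set_mem Ba /set_mem Bb; apply/mem_set.
exact: (cB a b l%:num (ge0 l) (le1 l) Ba Bb).
Qed.

Lemma closure_half (L : Z -> R) (H : set Z) c y : continuous (L : Z -> R^o) ->
  (forall h, H h -> L h <= c) -> closure H y -> L y <= c.
Proof.
move=> Lc HL cy; rewrite leNgt; apply/negP => lt.
have := Lc y; move/cvgrPdist_lt => /(_ (L y - c)); rewrite subr_gt0 => /(_ lt) hn.
have [h [Hh /= hh]] := cy _ hn.
have := HL h Hh; have := ler_norm (L y - L h); lra.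
Qed.

Lemma pos_mule (k : R) (e : \bar R) : 0 < k -> (0 <= k%:E * e)%E -> (0 <= e)%E.
Proof.
move=> k0; case: e => [r| |] //=.
  by rewrite -EFinM !lee_fin pmulr_rge0.
by rewrite muleC gt0_mulNye ?lte_fin.
Qed.

End Aux.
Unset Implicit Arguments. Set Strict Implicit.

Theorem mainTheorem1 (R : realType) (X : lmodType R) (Z : tvsType R)
  (C : set Z)
  (hZ : hausdorff_space Z)
  (hCcl : closed C) (hCcone : convex_cone C)
  (hCneg : exists zs : Z -> R, neg_dual_cone C zs /\ zs != (fun=> 0))
  (f : X -> set Z) (hfG : forall x, in_G C (f x))
  (hf : G_convex f) (x0 : X) (hx0 : dom f x0) :
  (forall (x : X) (zs : Z -> R), neg_dual_cone C zs -> zs != (fun=> 0) ->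
     phi f zs x0 = -oo%E \/ (0 <= ddir (phi f zs) x0 (x - x0))%E)
  <-> f x0 = inf_image f.
Proof.
have [a0 fa0] : exists a, f x0 a by apply/set0P; exact: hx0.
split; last first.
  move=> hinf x zs _ _.
  have sub : forall y, f y `<=` f x0.
    move=> y a fa; rewrite hinf; apply: subset_closure; apply: conv_hull_sub.
    by exists y.
  have mono : forall y, (phi f zs x0 <= phi f zs y)%E.
    move=> y; apply: le_ereal_inf; exact: image_subset.
  have ub : (phi f zs x0 <= (- zs a0)%:E)%E.
    by apply: ereal_inf_lbound; exists a0.
  have [->|hne] := eqVneq (phi f zs x0) -oo%E; [by left|right].
  apply/ereal_infP => _ [t t0 <-]; apply: mule_ge0; first by rewrite lee_fin invr_ge0 ltW.
  apply/ereal_infP => _ [s hs <-].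
  move: hs (mono (x0 + t *: (x - x0))) ub hne.
  case: (phi f zs x0) => [r| |] //=.
  case: (phi f zs (x0 + t *: (x - x0))) => [q| |] //=.
  by rewrite !lee_fin => h1 h2 _ _; lra.
move=> cond.
have hfx0 := hfG x0.
set D := conv_hull (Defs.msum (f x0) C).
have fD : f x0 = closure D by rewrite {1}hfx0.
have cD : cvx D by apply: conv_hull_cvx.
have C0 : C 0 := hCcone.1.
have msumD : forall a c0, f x0 a -> C c0 -> D (a + c0).
  by move=> a c0 fa Cc; apply: conv_hull_sub; exists a => //; exists c0.
have K : forall y, ~ f x0 y -> exists L : Z -> R, exists c,
    (forall a b, L (a + b) = L a + L b) /\ (forall s a, L (s *: a) = s * L a) /\
    continuous (L : Z -> R^o) /\ c < L y /\ (forall a, f x0 a -> L a <= c) /\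
    neg_dual_cone C L /\ L != (fun=> 0).
  move=> y ny; have nyD : ~ closure D y by rewrite -fD.
  have [L [La [Ls [Lc [c [cy LD]]]]]] := separation cD (msumD a0 0 fa0 C0) nyD.
  have Lf : forall a, f x0 a -> L a <= c.
    by move=> a; rewrite fD; exact: closure_half.
  exists L, c; do 5!(split; first done); split.
  - split; first split.
    + by move=> s u v; rewrite La Ls.
    + exact: Lc.
    + move=> c0 Cc0; rewrite leNgt; apply/negP => pos.
      pose s := (`|c - L a0| + 1) / L c0.
      have s0 : 0 < s by rewrite divr_gt0 // ltr_pwDr // normr_ge0.
      have : D (a0 + s *: c0) by apply: msumD => //; exact: hCcone.2.1.
      move/LD; rewrite La Ls /s divfK ?gt_eqF //.
      have := ler_norm (c - L a0); lra.
  - apply/eqP => L0; move: (Lf a0 fa0) cy; rewrite L0 /=; lra.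
have sub : forall x, f x `<=` f x0.
  move=> x z fz; case: (pselect (f x0 z)) => // nz; exfalso.
  have [L [c [La [Ls [Lc [cz [Lf [ndc L0]]]]]]]] := K z nz.
  have lb : ((- c)%:E <= phi f L x0)%E.
    by apply/ereal_infP => _ [a fa <-]; rewrite lee_fin lerN2; exact: Lf.
  have ub : (phi f L x0 <= (- L a0)%:E)%E by apply: ereal_inf_lbound; exists a0.
  have [r er] : exists r, phi f L x0 = r%:E.
    by move: lb ub; case: (phi f L x0) => [r| |] //= _ _; exists r.
  case: (cond x L ndc L0) => [|dd]; first by rewrite er.
  pose th : R := 2^-1.
  have th0 : 0 < th by rewrite /th invr_gt0.
  pose xh := x0 + th *: (x - x0).
  have mem : forall a, f x0 a -> f xh (th *: z + (1 - th) *: a).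
    move=> a fa.
    have -> : xh = th *: x + (1 - th) *: x0.
      by rewrite /xh scalerBr scalerBl scale1r addrCA addrC. apply: hf; first by rewrite th0 /th; lra.
    apply: subset_closure; exists (th *: z); first by exists z.
    by exists ((1 - th) *: a) => //; exists a.
  have hle : (ddir (phi f L) x0 (x - x0) <=
              (th^-1)%:E * ires (phi f L xh) (phi f L x0))%E.
    by apply: ereal_inf_lbound; exists th.
  have ires0 : (0 <= ires (phi f L xh) (phi f L x0))%E.
    by apply: (@pos_mule _ (th^-1)); [rewrite invr_gt0|exact: le_trans dd hle].
  have key : forall a, f x0 a -> 2 * r + L z <= - L a.
    move=> a fa.
    pose t := - (th * L z) - ((1 - th) * L a) - r.
    have : (ires (phi f L xh) (phi f L x0) <= t%:E)%E.
      apply: ereal_inf_lbound; exists t => //=; rewrite er /=.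
      apply: ereal_inf_lbound; exists (th *: z + (1 - th) *: a); first exact: mem.
      by rewrite La !Ls /t; congr EFin; rewrite [RHS]addrC subrK opprD.
    move/(le_trans ires0); rewrite lee_fin /t /th; lra.
  have : ((2 * r + L z)%:E <= phi f L x0)%E.
    by apply/ereal_infP => _ [a fa <-]; rewrite lee_fin; exact: key.
  rewrite er lee_fin => h.
  move: lb; rewrite er lee_fin => h'.
  by clear -h h' cz; lra.
apply/seteqP; split.
  move=> a fa; apply: subset_closure; apply: conv_hull_sub; by exists x0.
move=> y hy; case: (pselect (f x0 y)) => // ny; exfalso.
have [L [c [La [Ls [Lc [cy [Lf _]]]]]]] := K y ny.
have hH : forall h, conv_hull (\bigcup_(x in setT) f x) h -> L h <= c.
  apply: (conv_hull_min (B := [set h | L h <= c])).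
    move=> a b l l0 l1 /= ha hb; rewrite La !Ls; nra.
  by move=> h [x _ fh]; exact: Lf (sub x h fh).
have := @closure_half R Z L _ c y Lc hH hy; lra.
Qed.
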